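(* Let $u,v,w$ be words of length $N$. For an oriented TFPL $f$ with boundary $(u,v;w)$, let $M_o(f)$ be the set of edges of $f$ oriented from an odd vertex to an even vertex, and $M_e(f)$ the set of edges of $f$ oriented from an even vertex to an odd vertex. Then $f\mapsto (M_o(f),M_e(f))$ is a bijection between the set of oriented TFPLs with boundary $(u,v;w)$ and the set of ordered pairs $(M_o,M_e)$ where $M_o$ is a perfect matching of $G^N_o(u,w)$, $M_e$ is a perfect matching of $G^N_e(v,w)$, and $M_o$ and $M_e$ are disjoint as sets of edges of $G^N$.
   Context: Let $N\ge 1$. $G^N$ is the induced subgraph of the square lattice $\mathbb{Z}^2$ formed by $N$ consecutive, horizontally centred rows having $3,5,\dots,2N+1$ vertices from top to bottom. It is bipartite; vertices of the same colour as the leftmost vertex of each row are called odd, the others even. Let $B_1,\dots,B_N$ be the even vertices of the bottom row, $L_1,\dots,L_N$ the leftmost vertices of the rows, and $R_1,\dots,R_N$ the rightmost vertices of the rows, each family numbered from left to right (so $L_1$ is the leftmost vertex of the bottom row and $R_1$ the rightmost vertex of the top row). A TFPL of size $N$ is a subgraph $f$ of $G^N$ (a set of edges) such that each $L_i$ and each $R_i$ has degree $0$ or $1$, each $B_i$ has degree $1$, every other vertex has degree $2$, and no path of $f$ joins two vertices $L_i,L_j$ or two vertices $R_i,R_j$. An oriented TFPL is a TFPL together with an orientation of each of its edges such that every vertex of degree $2$ has one incoming and one outgoing edge, the edges at the $L_i$ are oriented away from $L_i$, and the edges at the $R_i$ are oriented into $R_i$. For words $u,v,w\in\{0,1\}^N$,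 an oriented TFPL has boundary $(u,v;w)$ if for all $i$: $u_i=1$ iff $L_i$ has degree $1$; $v_i=0$ iff $R_i$ has degree $1$; $w_i=1$ if $B_i$ has in-degree $1$ and $w_i=0$ if $B_i$ has out-degree $1$. $G^N_o(u,w)$ is the induced subgraph of $G^N$ obtained by deleting all $R_i$, all $B_i$ with $w_i=0$, and all $L_i$ with $u_i=0$. $G^N_e(v,w)$ is the induced subgraph of $G^N$ obtained by deleting all $L_i$, all $B_i$ with $w_i=1$, and all $R_i$ with $v_i=1$. *)

(* Defs.v *)
From mathcomp Require Import all_boot.
Set Implicit Arguments. Unset Strict Implicit. Unset Printing Implicit Defensive.

(* Coordinates: a grid point (r, c) : 'I_N * 'I_(2N+1) stands for the vertex in
   row r+1 (rows numbered 1..N from top to bottom) with horizontal position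
   x = c - N (rows are centred at x = 0; row k has x in [-k, k]). *)
Definition validp (N : nat) (p : 'I_N * 'I_N.*2.+1) : bool :=
  (N <= p.2 + p.1.+1) && (p.2 <= N + p.1.+1).

Definition vtx (N : nat) := {p : 'I_N * 'I_N.*2.+1 | validp p}.

Section G.
Variable N : nat.
Implicit Types x y : vtx N.

Definition row x : nat := (val x).1.
Definition col x : nat := (val x).2.

(* adjacency in the square lattice Z^2 (induced subgraph) *)
Definition adj x y : bool :=
  ((row x == row y) && (((col x).+1 == col y) || ((col y).+1 == col x)))
  || ((col x == col y) && (((row x).+1 == row y) || ((row y).+1 == row x))).

(* colour classes: odd = colour of the leftmost vertex of each row *)
Definition oddV x : bool := ~~ odd (col x + (row x).+1 + N).
Definition evenV x : bool := odd (col x + (row x).+1 + N).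

(* boundary vertices, indices i : 'I_N stand for i+1 = 1..N *)
(* L_{i+1} : leftmost vertex of (1-based) row N - i *)
Definition isL (i : 'I_N) x : bool := (row x == N.-1 - i) && (col x + (row x).+1 == N).
(* R_{i+1} : rightmost vertex of (1-based) row i+1 *)
Definition isR (i : 'I_N) x : bool := (row x == i) && (col x == N + (row x).+1).
(* B_{i+1} : (i+1)-th even vertex of the bottom row, x-coordinate -N+2i+1 *)
Definition isB (i : 'I_N) x : bool := (row x == N.-1) && (col x == i.*2.+1).

Definition is_edge (e : {set vtx N}) : bool :=
  [exists x, exists y, adj x y && (e == [set x; y])].

Definition deg (f : {set {set vtx N}}) x : nat := #|[set e in f | x \in e]|.

Definition frel (f : {set {set vtx N}}) : rel (vtx N) := fun x y => [set x; y] \in f.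

Definition TFPL (f : {set {set vtx N}}) : Prop :=
  [/\ (forall e, e \in f -> is_edge e),
      (forall x, [exists i, isL i x || isR i x] -> deg f x <= 1),
      (forall i x, isB i x -> deg f x = 1),
      (forall x, ~~ [exists i, [|| isL i x, isR i x | isB i x]] -> deg f x = 2)
    & (forall i j x y, i != j ->
         ((isL i x && isL j y) || (isR i x && isR j y)) -> ~~ connect (frel f) x y)].

Definition under (A : {set vtx N * vtx N}) : {set {set vtx N}} :=
  [set [set a.1; a.2] | a in A].
Definition indeg (A : {set vtx N * vtx N}) x : nat := #|[set a in A | a.2 == x]|.
Definition outdeg (A : {set vtx N * vtx N}) x : nat := #|[set a in A | a.1 == x]|.

Definition oriented_TFPL (A : {set vtx N * vtx N}) : Prop :=
  [/\ (forall a, a \in A -> adj a.1 a.2),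
      (forall x y, (x, y) \in A -> (y, x) \notin A),
      TFPL (under A),
      (forall x, deg (under A) x = 2 -> indeg A x = 1 /\ outdeg A x = 1)
    & (forall i x, isL i x -> indeg A x = 0) /\
      (forall i x, isR i x -> outdeg A x = 0)].

Definition has_boundary (u v w : 'I_N -> bool) (A : {set vtx N * vtx N}) : Prop :=
  forall i x,
    [/\ isL i x -> (u i <-> deg (under A) x = 1),
        isR i x -> (~~ v i <-> deg (under A) x = 1),
        isB i x -> w i -> indeg A x = 1
      & isB i x -> ~~ w i -> outdeg A x = 1].

Definition Vo (u w : 'I_N -> bool) : {set vtx N} :=
  [set x | ~~ [exists i, isR i x] && ~~ [exists i, isB i x && ~~ w i]
           && ~~ [exists i, isL i x && ~~ u i]].
Definition Ve (v w : 'I_N -> bool) : {set vtx N} :=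
  [set x | ~~ [exists i, isL i x] && ~~ [exists i, isB i x && w i]
           && ~~ [exists i, isR i x && v i]].

Definition perfect_matching (S : {set vtx N}) (M : {set {set vtx N}}) : Prop :=
  (forall e, e \in M -> is_edge e /\ e \subset S) /\
  (forall x, x \in S -> #|[set e in M | x \in e]| = 1).

Definition Mo (A : {set vtx N * vtx N}) : {set {set vtx N}} :=
  [set [set a.1; a.2] | a in A & (oddV a.1 && evenV a.2)].
Definition Me (A : {set vtx N * vtx N}) : {set {set vtx N}} :=
  [set [set a.1; a.2] | a in A & (evenV a.1 && oddV a.2)].

End G.

(* Main.v *)
Require Import Defs.
From mathcomp Require Import all_boot zify.
Set Implicit Arguments. Unset Strict Implicit. Unset Printing Implicit Defensive.

Section S.
Variable N : nat.
Implicit Types x y : vtx N.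

Lemma row_lt x : row x < N. Proof. exact: ltn_ord. Qed.
Lemma validx x : (N <= col x + (row x).+1) && (col x <= N + (row x).+1).
Proof. exact: (valP x). Qed.

Lemma odd_adj a b : a.+1 = b \/ b.+1 = a -> odd b = ~~ odd a.
Proof. by case=> <- /=; rewrite ?negbK. Qed.

Lemma adj_par x y : adj x y -> oddV y = ~~ oddV x.
Proof.
rewrite /adj /oddV => /orP[] /andP[/eqP e /orP[] /eqP e'];
  rewrite (@odd_adj (col x + (row x).+1 + N)) //; lia.
Qed.

Lemma adj_sym x y : adj x y -> adj y x.
Proof.
by rewrite /adj => /orP[] /andP[/eqP -> H]; apply/orP; [left|right];
  rewrite eqxx /= orbC.
Qed.

Lemma adj_neq x y : adj x y -> x != y.
Proof. by apply: contraL => /eqP ->; rewrite /adj; apply/negP; case/orP=> /andP[_]; lia. Qed.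

Lemma evenVE x : evenV x = ~~ oddV x.
Proof. by rewrite /evenV /oddV negbK. Qed.

Lemma isL_odd i x : isL i x -> oddV x.
Proof.
rewrite /isL /oddV => /andP[_ /eqP h].
have -> : col x + (row x).+1 + N = N.*2 by lia.
by rewrite odd_double.
Qed.

Lemma isR_odd i x : isR i x -> oddV x.
Proof.
rewrite /isR /oddV => /andP[_ /eqP h].
have -> : col x + (row x).+1 + N = (N + (row x).+1).*2 by lia.
by rewrite odd_double.
Qed.

Lemma isB_even i x : isB i x -> ~~ oddV x.
Proof.
rewrite /isB /oddV negbK => /andP[/eqP h /eqP h'].
have := row_lt x => hr.
have -> : col x + (row x).+1 + N = (i + N).*2.+1 by lia.
by rewrite /= odd_double.
Qed.

Lemma LR i j x : isL i x -> isR j x = false.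
Proof. rewrite /isL /isR => /andP[_ /eqP h]; apply/negP => /andP[_ /eqP]; lia. Qed.
Lemma LB i j x : isL i x -> isB j x = false.
Proof. move=> /isL_odd h; apply/negP => /isB_even; by rewrite h. Qed.
Lemma RB i j x : isR i x -> isB j x = false.
Proof. move=> /isR_odd h; apply/negP => /isB_even; by rewrite h. Qed.
Lemma LL i j x : isL i x -> isL j x -> i = j.
Proof.
rewrite /isL => /andP[/eqP h _] /andP[/eqP h' _]; apply/val_inj => /=.
have := ltn_ord i; have := ltn_ord j; lia.
Qed.
Lemma RR i j x : isR i x -> isR j x -> i = j.
Proof. rewrite /isR => /andP[/eqP h _] /andP[/eqP h' _]; apply/val_inj => /=; lia. Qed.
Lemma BB i j x : isB i x -> isB j x -> i = j.
Proof. rewrite /isB => /andP[_ /eqP h] /andP[_ /eqP h']; apply/val_inj => /=; lia. Qed.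

Variables (u v w : 'I_N -> bool).

Lemma VL i x : isL i x -> (x \in Vo u w) = u i /\ (x \in Ve v w) = false.
Proof.
move=> h; rewrite !inE; split.
  have -> : [exists j, isR j x] = false by apply/negbTE/existsP => -[j]; rewrite (LR j h).
  have -> : [exists j, isB j x && ~~ w j] = false by apply/negbTE/existsP => -[j]; rewrite (LB j h).
  case: (boolP (u i)) => ui /=.
    by apply/negP => /existsP[j /andP[/(LL h) <-]]; rewrite ui.
  by apply/negbTE; rewrite negbK; apply/existsP; exists i; rewrite h ?ui ?vi ?wi.
suff -> : [exists j, isL j x] by []. by apply/existsP; exists i.
Qed.

Lemma VR i x : isR i x -> (x \in Vo u w) = false /\ (x \in Ve v w) = ~~ v i.
Proof.
move=> h; rewrite !inE; split.
  suff -> : [exists j, isR j x] by []. by apply/existsP; exists i.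
have -> : [exists j, isL j x] = false by apply/negbTE/existsP => -[j /(LR i)]; rewrite h.
have -> : [exists j, isB j x && w j] = false by apply/negbTE/existsP => -[j]; rewrite (RB j h).
case: (boolP (v i)) => vi /=.
  by apply/negbTE; rewrite negbK; apply/existsP; exists i; rewrite h ?ui ?vi ?wi.
by apply/negP => /existsP[j /andP[/(RR h) <-]]; rewrite (negbTE vi).
Qed.

Lemma VB i x : isB i x -> (x \in Vo u w) = w i /\ (x \in Ve v w) = ~~ w i.
Proof.
move=> h; rewrite !inE.
have -> : [exists j, isR j x] = false by apply/negbTE/existsP => -[j /(RB i)]; rewrite h.
have -> : [exists j, isL j x] = false by apply/negbTE/existsP => -[j /(LB i)]; rewrite h.
have -> : [exists j, isL j x && ~~ u j] = false by apply/negbTE/existsP => -[j /andP[/(LB i)]]; rewrite h.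
have -> : [exists j, isR j x && v j] = false by apply/negbTE/existsP => -[j /andP[/(RB i)]]; rewrite h.
case: (boolP (w i)) => wi /=; rewrite !andbT; split => //.
- by apply/negP => /existsP[j /andP[/(BB h) <-]]; rewrite wi.
- by apply/negbTE; rewrite negbK; apply/existsP; exists i; rewrite h ?ui ?vi ?wi.
- by apply/negbTE; rewrite negbK; apply/existsP; exists i; rewrite h ?ui ?vi ?wi.
- by apply/negP => /existsP[j /andP[/(BB h) <-]]; rewrite (negbTE wi).
Qed.

Lemma VN x : ~~ [exists i, [|| isL i x, isR i x | isB i x]] ->
  (x \in Vo u w) /\ (x \in Ve v w).
Proof.
move=> h.
have nL j : isL j x = false by apply/negbTE; apply: contra h => hj; apply/existsP; exists j; rewrite hj.
have nR j : isR j x = false by apply/negbTE; apply: contra h => hj; apply/existsP; exists j; rewrite hj orbT.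
have nB j : isB j x = false by apply/negbTE; apply: contra h => hj; apply/existsP; exists j; rewrite hj !orbT.
rewrite !inE; split; (apply/andP; split; [apply/andP; split|]);
  by apply/negP => /existsP[j]; rewrite ?nL ?nR ?nB.
Qed.

End S.

Lemma set2_inv (T : finType) (p q r s : T) : [set p; q] = [set r; s] ->
  (p = r /\ q = s) \/ (p = s /\ q = r).
Proof.
move=> E.
have hp : p \in [set r; s] by rewrite -E set21.
have hq : q \in [set r; s] by rewrite -E set22.
have hr : r \in [set p; q] by rewrite E set21.
have hs : s \in [set p; q] by rewrite E set22.
move: hp hq hr hs; rewrite !inE.
by case/orP=> /eqP ->; case/orP=> /eqP ->; rewrite ?orbb => /eqP h1 /eqP h2; auto;
  rewrite ?h1 ?h2; auto.
Qed.

Section Gen.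
#[local] Set Default Proof Using "All".
Variable T : finType.
Variables (ad : rel T) (od ev : pred T).
Hypothesis ad_sym : forall x y, ad x y -> ad y x.
Hypothesis ad_neq : forall x y, ad x y -> x != y.
Hypothesis ad_par : forall x y, ad x y -> od y = ~~ od x.
Hypothesis evE : forall x, ev x = ~~ od x.
Implicit Types (x y z : T) (A : {set T * T}).

Definition gdeg (f : {set {set T}}) x : nat := #|[set e in f | x \in e]|.
Definition gunder A : {set {set T}} := [set [set a.1; a.2] | a in A].
Definition gindeg A x : nat := #|[set a in A | a.2 == x]|.
Definition goutdeg A x : nat := #|[set a in A | a.1 == x]|.
Definition gfrel (f : {set {set T}}) : rel T := fun x y => [set x; y] \in f.
Definition gis_edge (e : {set T}) : bool := [exists x, exists y, ad x y && (e == [set x; y])].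
Definition gMo A : {set {set T}} := [set [set a.1; a.2] | a in A & (od a.1 && ev a.2)].
Definition gMe A : {set {set T}} := [set [set a.1; a.2] | a in A & (ev a.1 && od a.2)].
Definition gpm (S : {set T}) (M : {set {set T}}) : Prop :=
  (forall e, e \in M -> gis_edge e /\ e \subset S) /\
  (forall x, x \in S -> #|[set e in M | x \in e]| = 1).

Definition edg (a : T * T) : {set T} := [set a.1; a.2].
Definition AA A :=
  (forall a, a \in A -> ad a.1 a.2) /\ (forall x y, (x, y) \in A -> (y, x) \notin A).

Lemma edg_inj A : AA A -> {in A &, injective edg}.
Proof.
case=> hadj hanti [a1 a2] [b1 b2] ha hb /set2_inv /= [[-> ->]|[e1 e2]] //.
by subst; move: (hanti _ _ hb); rewrite ha.
Qed.

Lemma in_edg x (a : T * T) : (x \in edg a) = (x == a.1) || (x == a.2).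
Proof. exact: in_set2. Qed.

Lemma card_inc (D : {set T * T}) x : {in D &, injective edg} ->
  gdeg (edg @: D) x = #|[set a in D | (x == a.1) || (x == a.2)]|.
Proof.
move=> inj; rewrite /gdeg.
have -> : [set e in edg @: D | x \in e] = edg @: [set a in D | (x == a.1) || (x == a.2)].
  apply/setP => e; rewrite in_set; apply/andP/imsetP.
    by case=> /imsetP[a ha ->] xe; exists a => //; rewrite in_set ha -in_edg.
  by case=> a; rewrite in_set => /andP[ha xa] ->; split; [apply: imset_f | rewrite in_edg].
rewrite card_in_imset // => a b; rewrite !in_set => /andP[ha _] /andP[hb _]; exact: inj.
Qed.

Lemma underE A : gunder A = edg @: A. Proof. by []. Qed.

Lemma deg_io A x : AA A -> gdeg (gunder A) x = gindeg A x + goutdeg A x.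
Proof.
move=> hA; rewrite underE card_inc; last exact: edg_inj.
have -> : [set a in A | (x == a.1) || (x == a.2)] = [set a in A | a.2 == x] :|: [set a in A | a.1 == x].
  by apply/setP => a; rewrite in_setU !in_set -andb_orr orbC (eq_sym x) (eq_sym x).
rewrite cardsU.
suff -> : [set a in A | a.2 == x] :&: [set a in A | a.1 == x] = set0 by rewrite cards0 subn0.
apply/setP => a; rewrite !inE; apply/negbTE/negP => /andP[/andP[ha /eqP e2] /andP[_ /eqP e1]].
by move: (ad_neq (hA.1 a ha)); rewrite e1 e2 eqxx.
Qed.

Lemma MoE A : gMo A = edg @: [set a in A | od a.1 && ev a.2].
Proof. apply/setP=> e; apply/imsetP/imsetP => -[a ha ->]; exists a => //; move: ha; rewrite !inE. Qed.

Lemma MeE A : gMe A = edg @: [set a in A | ev a.1 && od a.2].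
Proof. apply/setP=> e; apply/imsetP/imsetP => -[a ha ->]; exists a => //; move: ha; rewrite !inE. Qed.

Lemma par_help (a1 a2 x : T) : a1 != a2 -> od a2 = ~~ od a1 ->
  (od a1 && ((x == a1) || (x == a2)) = (if od x then a1 == x else a2 == x))
  /\ (~~ od a1 && ((x == a1) || (x == a2)) = (if od x then a2 == x else a1 == x)).
Proof.
move=> hn hp.
have hn' : a2 != a1 by rewrite eq_sym.
have [->|n1] := eqVneq x a1.
  by case: (od a1); rewrite /= ?orbT (negbTE hn').
have [->|n2] := eqVneq x a2.
  by rewrite hp; case: (od a1); rewrite /= ?orbT ?(negbTE hn) ?(negbTE hn').
by rewrite /= !andbF; case: ifP.
Qed.

Lemma cntMo A x : AA A -> gdeg (gMo A) x = if od x then goutdeg A x else gindeg A x.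
Proof.
move=> hA; rewrite MoE card_inc; last first.
  by move=> a b; rewrite !inE => /andP[ha _] /andP[hb _]; exact: (edg_inj hA).
rewrite [RHS](_ : _ = #|[set a in A | if od x then a.1 == x else a.2 == x]|); last first.
  by rewrite /goutdeg /gindeg; case: ifP.
apply: eq_card => a; rewrite !in_set; case: (boolP (a \in A)) => ha //=.
have hp := ad_par (hA.1 a ha); have hn := ad_neq (hA.1 a ha).
by rewrite evE hp negbK andbb; case: (par_help x hn hp).
Qed.

Lemma cntMe A x : AA A -> gdeg (gMe A) x = if od x then gindeg A x else goutdeg A x.
Proof.
move=> hA; rewrite MeE card_inc; last first.
  by move=> a b; rewrite !inE => /andP[ha _] /andP[hb _]; exact: (edg_inj hA).
rewrite [RHS](_ : _ = #|[set a in A | if od x then a.2 == x else a.1 == x]|); last first.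
  by rewrite /goutdeg /gindeg; case: ifP.
apply: eq_card => a; rewrite !in_set; case: (boolP (a \in A)) => ha //=.
have hp := ad_par (hA.1 a ha); have hn := ad_neq (hA.1 a ha).
by rewrite evE hp andbb; case: (par_help x hn hp).
Qed.

Definition mkA (M1 M2 : {set {set T}}) : {set T * T} :=
  [set a | ad a.1 a.2 && ((edg a \in M1) && od a.1 || (edg a \in M2) && ev a.1)].

Lemma recon A : AA A -> A = mkA (gMo A) (gMe A).
Proof.
move=> hA; apply/setP => -[x y]; rewrite inE /=; apply/idP/idP.
  move=> ha; move: (hA.1 _ ha) => /= hxy; rewrite hxy /=.
  have hp : od y = ~~ od x := ad_par hxy.
  case ox: (od x).
    by rewrite MoE imset_f // inE ha /= ox evE hp ox.
  by rewrite andbF /= evE ox MeE imset_f // inE ha /= evE ox hp ox.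
case/andP => hxy /orP[/andP[hm ox]|/andP[hm ex]].
  move: hm; rewrite MoE => /imsetP[b]; rewrite inE => /andP[hb /andP[ob eb]].
  rewrite /edg /= => /set2_inv; rewrite /= => -[[e1 e2]|[e1 e2]].
    by rewrite e1 e2 -surjective_pairing.
  by move: eb; rewrite evE -e1 ox.
move: hm; rewrite MeE => /imsetP[b]; rewrite inE => /andP[hb /andP[eb ob]].
rewrite /edg /= => /set2_inv; rewrite /= => -[[e1 e2]|[e1 e2]].
  by rewrite e1 e2 -surjective_pairing.
by move: ex; rewrite evE e1 ob.
Qed.

Lemma edgC x y : edg (x, y) = edg (y, x).
Proof. by rewrite /edg /= setUC. Qed.

Lemma mkA_AA (M1 M2 : {set {set T}}) : [disjoint M1 & M2] -> AA (mkA M1 M2).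
Proof.
move=> hd; split; first by move=> a; rewrite inE => /andP[].
move=> x y; rewrite !inE /= => /andP[hxy h1]; apply/negP => /andP[_ h2].
rewrite -(edgC x y) in h2.
have hp := ad_par hxy; move: h1 h2; rewrite !evE hp.
case: (od x); rewrite /= ?andbT ?andbF ?orbF ?orFb => h1 h2.
  by rewrite (disjointFr hd h1) in h2.
by rewrite (disjointFr hd h2) in h1.
Qed.

Lemma mkA_Mo (M1 M2 : {set {set T}}) : (forall e, e \in M1 -> gis_edge e) -> gMo (mkA M1 M2) = M1.
Proof.
move=> hE; apply/setP => e; rewrite MoE; apply/imsetP/idP.
  case=> a; rewrite !inE => /andP[/andP[_ /orP[/andP[h _]|/andP[_ h]]] /andP[h' _]] -> //.
  by move: h; rewrite evE h'.
move=> he; case/existsP: (hE e he) => p /existsP[q /andP[hpq /eqP ee]].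
have hp := ad_par hpq.
case op: (od p).
  exists (p, q) => //; rewrite !inE /= hpq op /edg /= -ee he /=.
  by rewrite evE hp op.
exists (q, p); last by rewrite ee /edg /= setUC.
rewrite !inE /= (ad_sym hpq) /edg /= setUC -ee he hp op /=.
by rewrite evE op.
Qed.

Lemma mkA_Me (M1 M2 : {set {set T}}) : (forall e, e \in M2 -> gis_edge e) -> gMe (mkA M1 M2) = M2.
Proof.
move=> hE; apply/setP => e; rewrite MeE; apply/imsetP/idP.
  case=> a; rewrite !inE => /andP[/andP[_ /orP[/andP[_ h]|/andP[h _]]] /andP[h' _]] -> //.
  by move: h'; rewrite evE h.
move=> he; case/existsP: (hE e he) => p /existsP[q /andP[hpq /eqP ee]].
have hp := ad_par hpq.
case op: (od p).
  exists (q, p); last by rewrite ee /edg /= setUC.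
  rewrite !inE /= (ad_sym hpq) /edg /= setUC -ee he hp op /=.
  by rewrite evE hp op orbT.
exists (p, q) => //; rewrite !inE /= hpq op /edg /= -ee he /=.
by rewrite evE hp op !orbT.
Qed.

Lemma pm_cnt (S : {set T}) M x : gpm S M -> gdeg M x = (x \in S).
Proof.
case=> hE hc; case: (boolP (x \in S)) => hx; first exact: hc.
apply/eqP; rewrite cards_eq0; apply/eqP/setP => e; rewrite !inE.
apply/negbTE/negP => /andP[he xe]; move: hx; by rewrite (subsetP (hE e he).2 x xe).
Qed.

Lemma frel_arc A z z' : gfrel (gunder A) z z' -> (z, z') \in A \/ (z', z) \in A.
Proof.
rewrite /gfrel => /imsetP[a ha] /set2_inv [[e1 e2]|[e1 e2]].
  by left; rewrite e1 e2 -surjective_pairing.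
by right; rewrite e1 e2 -surjective_pairing.
Qed.

Lemma indeg_gt0 A w z : (w, z) \in A -> 0 < gindeg A z.
Proof. by move=> h; apply/card_gt0P; exists (w, z); rewrite inE h /=. Qed.

Lemma indeg_gt1 A w w' z : (w, z) \in A -> (w', z) \in A -> w != w' -> 1 < gindeg A z.
Proof.
move=> h1 h2 n.
have : [set (w, z); (w', z)] \subset [set a in A | a.2 == z].
  by apply/subsetP => a; rewrite !inE => /orP[] /eqP ->; rewrite ?h1 ?h2 /=.
move/subset_leq_card; rewrite cards2; apply: leq_trans; rewrite ltnS lt0b.
by apply: contra n => /eqP [->].
Qed.

Lemma walk A : (forall z, gindeg A z <= 1) -> forall p w z, (w, z) \in A ->
  w \notin z :: p -> uniq (z :: p) -> path (gfrel (gunder A)) z p -> 0 < gindeg A (last z p).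
Proof.
move=> hle; elim => [|z' p IH] w z hwz hw hu hp /=; first exact: indeg_gt0 hwz.
case/andP: hp => e hp; case/frel_arc: e => h.
  by apply: (IH z) => //; case/andP: hu.
have : w != z' by move: hw; rewrite !inE negb_or => /andP[_]; rewrite negb_or => /andP[].
by move/(indeg_gt1 hwz h); rewrite ltnNge hle.
Qed.

Lemma no_conn A x y : (forall z, gindeg A z <= 1) -> x != y -> gindeg A x = 0 ->
  gindeg A y = 0 -> ~~ connect (gfrel (gunder A)) x y.
Proof.
move=> hle hxy hx hy; apply/negP => /connectP[p hp ey].
move: hxy hy; rewrite ey; case/shortenP: hp => p' hp' hu _.
case: p' hp' hu => [|z p''] /=; first by rewrite eqxx.
case/andP => e hp hu _; case/frel_arc: e => h.
  move: hu => /andP[nx hu'] hy.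
  by have := walk hle h nx hu' hp; rewrite hy.
by have := indeg_gt0 h; rewrite hx.
Qed.

Definition Arev A : {set T * T} := [set (a.2, a.1) | a in A].

Lemma Arev_indeg A x : gindeg (Arev A) x = goutdeg A x.
Proof.
rewrite /gindeg /goutdeg.
have -> : [set a in Arev A | a.2 == x] = [set (a.2, a.1) | a in [set a in A | a.1 == x]].
  apply/setP => -[p q]; rewrite inE; apply/andP/imsetP => /=.
    case=> /imsetP[a ha [-> ->]] /eqP <-; exists a => //; by rewrite inE ha /=.
  case=> a; rewrite inE => /andP[ha /eqP ex] [-> ->]; split; last by rewrite ex.
  exact: imset_f.
by apply: card_imset => -[a1 a2] [b1 b2] /= [-> ->].
Qed.

Lemma Arev_under A : gunder (Arev A) = gunder A.
Proof.
apply/setP => e; apply/imsetP/imsetP.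
  case=> a /imsetP[b hb ->] -> /=; exists b => //; by rewrite setUC.
case=> a ha ->; exists (a.2, a.1); first exact: imset_f.
by rewrite /= setUC.
Qed.

Lemma pm_of (M : {set {set T}}) (S : {set T}) : (forall e, e \in M -> gis_edge e) ->
  (forall x, gdeg M x = (x \in S)) -> gpm S M.
Proof.
move=> hE hc; split; last by move=> x hx; rewrite -/(gdeg M x) hc hx.
move=> e he; split; first exact: hE.
apply/subsetP => y ye.
have : 0 < gdeg M y by apply/card_gt0P; exists e; rewrite in_set he ye.
by rewrite hc; case: (y \in S).
Qed.

Lemma Mo_edge A : AA A -> forall e, e \in gMo A -> gis_edge e.
Proof.
move=> hA e; rewrite MoE => /imsetP[a]; rewrite in_set => /andP[ha _] ->.
by apply/existsP; exists a.1; apply/existsP; exists a.2; rewrite hA.1 // eqxx.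
Qed.

Lemma Me_edge A : AA A -> forall e, e \in gMe A -> gis_edge e.
Proof.
move=> hA e; rewrite MeE => /imsetP[a]; rewrite in_set => /andP[ha _] ->.
by apply/existsP; exists a.1; apply/existsP; exists a.2; rewrite hA.1 // eqxx.
Qed.

Lemma under_edge A : AA A -> forall e, e \in gunder A -> gis_edge e.
Proof.
move=> hA e /imsetP[a ha ->].
by apply/existsP; exists a.1; apply/existsP; exists a.2; rewrite hA.1 // eqxx.
Qed.

Lemma disj A : AA A -> [disjoint gMo A & gMe A].
Proof.
move=> hA; rewrite -setI_eq0; apply/eqP/setP => e; rewrite in_setI in_set0.
apply/negbTE/negP => /andP[]; rewrite MoE MeE => /imsetP[a ha ->] /imsetP[b hb].
move: ha hb; rewrite !in_set => /andP[ha /andP[oa ea]] /andP[hb /andP[eb ob]].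
case: a ha oa ea => a1 a2 ha oa ea; case: b hb eb ob => b1 b2 hb eb ob.
rewrite /edg /= => /set2_inv [[e1 e2]|[e1 e2]].
  by move: eb; rewrite /= -e1 evE oa.
by subst; move: (hA.2 _ _ ha); rewrite hb.
Qed.

Lemma no_conn_rev A x y : (forall z, goutdeg A z <= 1) -> x != y -> goutdeg A x = 0 ->
  goutdeg A y = 0 -> ~~ connect (gfrel (gunder A)) x y.
Proof.
move=> hle hxy hx hy; rewrite -Arev_under.
by apply: no_conn => // [z||]; rewrite Arev_indeg.
Qed.

End Gen.

Section C.
Variable N : nat.
Variables (u v w : 'I_N -> bool).
Implicit Types (x y : vtx N) (A : {set vtx N * vtx N}).

Definition HS := @adj_sym N.
Definition HN := @adj_neq N.
Definition HP := @adj_par N.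
Definition HE := @evenVE N.
Notation AAv := (AA (@adj N)).

Lemma deg_io' A x : AAv A -> deg (under A) x = indeg A x + outdeg A x.
Proof. exact: (deg_io HS HN HP HE). Qed.

Lemma cntMo' A x : AAv A -> deg (Mo A) x = if oddV x then outdeg A x else indeg A x.
Proof. exact: (cntMo HS HN HP HE). Qed.

Lemma cntMe' A x : AAv A -> deg (Me A) x = if oddV x then indeg A x else outdeg A x.
Proof. exact: (cntMe HS HN HP HE). Qed.

Lemma char_fwd A : oriented_TFPL A -> has_boundary u v w A ->
  AAv A /\ (forall x, outdeg A x = (if oddV x then x \in Vo u w else x \in Ve v w)
                  /\ indeg A x = (if oddV x then x \in Ve v w else x \in Vo u w)).
Proof.
case=> hadj hanti [hE hLR hB hN hC] h2 [hL hR] hbd.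
have hA : AAv A by split.
split=> // x; have hd := deg_io' x hA.
case: (boolP [exists i, isL i x]) => [/existsP[i Li]|nL].
  have [-> ->] := VL u v w Li; rewrite (isL_odd Li).
  have hi := hL i x Li.
  have hle : deg (under A) x <= 1 by apply: hLR; apply/existsP; exists i; rewrite Li.
  case: (hbd i x) => hu _ _ _; move: (hu Li) => {}hu.
  rewrite hi; split => //; rewrite hi in hd.
  case: (u i) hu => /= hu.
    by have := proj1 hu isT; lia.
  have hne : deg (under A) x <> 1 by move=> /hu.
  lia.
case: (boolP [exists i, isR i x]) => [/existsP[i Ri]|nR].
  have [-> ->] := VR u v w Ri; rewrite (isR_odd Ri).
  have ho := hR i x Ri.
  have hle : deg (under A) x <= 1 by apply: hLR; apply/existsP; exists i; rewrite Ri orbT.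
  case: (hbd i x) => _ hv _ _; move: (hv Ri) => {}hv.
  rewrite ho; split => //; rewrite ho in hd.
  case: (v i) hv => /= hv.
    have hne : deg (under A) x <> 1 by move=> /hv.
    lia.
  by have := proj1 hv isT; lia.
case: (boolP [exists i, isB i x]) => [/existsP[i Bi]|nB].
  have [-> ->] := VB u v w Bi; rewrite (negbTE (isB_even Bi)).
  have hb := hB i x Bi.
  case: (hbd i x) => _ _ hw1 hw2.
  case: (boolP (w i)) => wi /=.
    by have := hw1 Bi wi; lia.
  by have := hw2 Bi wi; lia.
have nN : ~~ [exists i, [|| isL i x, isR i x | isB i x]].
  apply/existsP => -[i /or3P[hi|hi|hi]].
  - by move/negP: nL; apply; apply/existsP; exists i.
  - by move/negP: nR; apply; apply/existsP; exists i.
  - by move/negP: nB; apply; apply/existsP; exists i.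
have [-> ->] := VN u v w nN.
have [-> ->] := h2 x (hN x nN).
by case: ifP.
Qed.

Lemma no_conn' A x y : (forall z, indeg A z <= 1) -> x != y -> indeg A x = 0 ->
  indeg A y = 0 -> ~~ connect (Defs.frel (under A)) x y.
Proof. exact: (no_conn HS HN HP HE). Qed.

Lemma no_conn_rev' A x y : (forall z, outdeg A z <= 1) -> x != y -> outdeg A x = 0 ->
  outdeg A y = 0 -> ~~ connect (Defs.frel (under A)) x y.
Proof. exact: (no_conn_rev HS HN HP HE). Qed.

Lemma char_bwd A : AAv A ->
  (forall x, outdeg A x = (if oddV x then x \in Vo u w else x \in Ve v w)
           /\ indeg A x = (if oddV x then x \in Ve v w else x \in Vo u w)) ->
  oriented_TFPL A /\ has_boundary u v w A.
Proof.
move=> hA hc.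
have hd x := deg_io' x hA.
have inle x : indeg A x <= 1 by case: (hc x) => _ ->; case: ifP => _; apply: leq_b1.
have outle x : outdeg A x <= 1 by case: (hc x) => -> _; case: ifP => _; apply: leq_b1.
have hLin i x : isL i x -> indeg A x = 0.
  by move=> Li; case: (hc x) => _ ->; rewrite (isL_odd Li); have [_ ->] := VL u v w Li.
have hRout i x : isR i x -> outdeg A x = 0.
  by move=> Ri; case: (hc x) => -> _; rewrite (isR_odd Ri); have [-> _] := VR u v w Ri.
split.
  split.
  - exact: hA.1.
  - exact: hA.2.
  - split.
    + exact: (under_edge HS HN HP HE hA).
    + move=> x /existsP[i /orP[Li|Ri]]; rewrite hd.
        by rewrite (hLin i x Li) add0n.
      by rewrite (hRout i x Ri) addn0.
    + move=> i x Bi; rewrite hd; case: (hc x) => -> ->.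
      rewrite (negbTE (isB_even Bi)); have [-> ->] := VB u v w Bi.
      by case: (w i).
    + move=> x nN; rewrite hd; case: (hc x) => -> ->; have [-> ->] := VN u v w nN.
      by case: ifP.
    + move=> i j x y nij /orP[/andP[Li Lj]|/andP[Ri Rj]].
        apply: no_conn' (hLin i x Li) (hLin j y Lj) => //.
        by apply: contra nij => /eqP exy; subst; rewrite (LL Li Lj).
      apply: no_conn_rev' (hRout i x Ri) (hRout j y Rj) => //.
      by apply: contra nij => /eqP exy; subst; rewrite (RR Ri Rj).
  - move=> x; rewrite hd => h; have := inle x; have := outle x; lia.
  - by split; [exact: hLin | exact: hRout].
move=> i x; split.
- move=> Li; rewrite hd (hLin i x Li) add0n.
  case: (hc x) => -> _; rewrite (isL_odd Li); have [-> _] := VL u v w Li.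
  by case: (u i).
- move=> Ri; rewrite hd (hRout i x Ri) addn0.
  case: (hc x) => _ ->; rewrite (isR_odd Ri); have [_ ->] := VR u v w Ri.
  by case: (v i).
- move=> Bi wi; case: (hc x) => _ ->; rewrite (negbTE (isB_even Bi)).
  by have [-> _] := VB u v w Bi; rewrite wi.
- move=> Bi wi; case: (hc x) => -> _; rewrite (negbTE (isB_even Bi)).
  by have [_ ->] := VB u v w Bi; rewrite wi.
Qed.
End C.

Theorem theorem3p3 (N : nat) (hN : 0 < N) (u v w : 'I_N -> bool) :
  (* the map is well defined into the set of admissible pairs *)
  (forall A : {set vtx N * vtx N}, oriented_TFPL A -> has_boundary u v w A ->
     [/\ perfect_matching (Vo u w) (Mo A), perfect_matching (Ve v w) (Me A)
       & [disjoint Mo A & Me A]]) /\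
  (* injective *)
  (forall A1 A2 : {set vtx N * vtx N},
     oriented_TFPL A1 -> has_boundary u v w A1 ->
     oriented_TFPL A2 -> has_boundary u v w A2 ->
     (Mo A1, Me A1) = (Mo A2, Me A2) -> A1 = A2) /\
  (* surjective *)
  (forall Mo' Me' : {set {set vtx N}},
     perfect_matching (Vo u w) Mo' -> perfect_matching (Ve v w) Me' ->
     [disjoint Mo' & Me'] ->
     exists A : {set vtx N * vtx N},
       [/\ oriented_TFPL A, has_boundary u v w A & (Mo A, Me A) = (Mo', Me')]).
Proof.
have HS := @adj_sym N; have HN := @adj_neq N; have HP := @adj_par N; have HE := @evenVE N.
split; [|split].
- move=> A hO hB; have [hA hc] := char_fwd hO hB.
  have cMo x : deg (Mo A) x = (x \in Vo u w).
    by rewrite cntMo' //; case: (hc x) => -> ->; case: (oddV x).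
  have cMe x : deg (Me A) x = (x \in Ve v w).
    by rewrite cntMe' //; case: (hc x) => -> ->; case: (oddV x).
  split.
  + exact: (pm_of HS HN HP HE (Mo_edge HS HN HP HE hA) cMo).
  + exact: (pm_of HS HN HP HE (Me_edge HS HN HP HE hA) cMe).
  + exact: (disj HS HN HP HE hA).
- move=> A1 A2 hO1 hB1 hO2 hB2 [e1 e2].
  have [hA1 _] := char_fwd hO1 hB1; have [hA2 _] := char_fwd hO2 hB2.
  have r1 : A1 = mkA (@adj N) (@oddV N) (@evenV N) (Mo A1) (Me A1) := recon HS HN HP HE hA1.
  have r2 : A2 = mkA (@adj N) (@oddV N) (@evenV N) (Mo A2) (Me A2) := recon HS HN HP HE hA2.
  by rewrite r1 r2 e1 e2.
- move=> Mo' Me' pm1 pm2 hd.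
  pose A := mkA (@adj N) (@oddV N) (@evenV N) Mo' Me'.
  have hA : AA (@adj N) A := mkA_AA HS HN HP HE hd.
  have eMo : Mo A = Mo' := mkA_Mo HS HN HP HE Me' (fun e he => (pm1.1 e he).1).
  have eMe : Me A = Me' := mkA_Me HS HN HP HE Mo' (fun e he => (pm2.1 e he).1).
  have c1 x : deg Mo' x = (x \in Vo u w) := pm_cnt HS HN HP HE x pm1.
  have c2 x : deg Me' x = (x \in Ve v w) := pm_cnt HS HN HP HE x pm2.
  have hc x : outdeg A x = (if oddV x then x \in Vo u w else x \in Ve v w)
           /\ indeg A x = (if oddV x then x \in Ve v w else x \in Vo u w).
    have := cntMo' x hA; have := cntMe' x hA.
    rewrite eMo eMe c1 c2; case: (oddV x) => <- <-; by split.
  have [hO hB] := char_bwd hA hc.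
  by exists A; split => //; rewrite eMo eMe.
Qed.
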